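(* If degree sequences $e$ and $d$ satisfy $e\preccurlyeq d$ in the Rao order, then $\Delta_{m(e)}(e)\le \Delta_{m(d)}(d)$.
   Context: Degree sequences (of finite simple graphs with at least one vertex) are listed in nonincreasing order. For such $d$, $m(d)=\max\{i : d_i\ge i-1\}$ and, for integers $k\ge 0$, $\Delta_k(d)=k(k-1)+\sum_{i>k}\min\{k,d_i\}-\sum_{i\le k}d_i$. Rao order: $e\preccurlyeq d$ if there exist a realization $H$ of $e$ and a realization $G$ of $d$ such that $H$ is an induced subgraph of $G$. *)

(* Defs.v *)
From mathcomp Require Import all_boot all_order all_algebra.
Set Implicit Arguments. Unset Strict Implicit. Unset Printing Implicit Defensive.

Definition simple_graph (n : nat) (g : rel 'I_n) : Prop :=
  irreflexive g /\ symmetric g.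

Definition gdeg (n : nat) (g : rel 'I_n) (v : 'I_n) : nat := #|[pred u | g v u]|.

Definition degseq (n : nat) (g : rel 'I_n) : seq nat :=
  sort geq [seq gdeg g v | v <- enum 'I_n].

Definition realizes (n : nat) (g : rel 'I_n) (d : seq nat) : Prop :=
  simple_graph g /\ degseq g = d.

Definition is_degseq (d : seq nat) : Prop :=
  exists (n : nat) (g : rel 'I_n), 0 < n /\ realizes g d.

(* Rao order: e ≼ d iff some realization H of e is an induced subgraph of some
   realization G of d (i.e. H is isomorphic, via an injective vertex map f, to
   the subgraph of G induced on the image of f). *)
Definition rao_le (e d : seq nat) : Prop :=
  exists (p n : nat) (h : rel 'I_p) (g : rel 'I_n) (f : 'I_p -> 'I_n),
    [/\ realizes h e, realizes g d, injective f &
        forall x y, h x y = g (f x) (f y)].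

(* d_i with 1-based index i is nth 0 d (i-1).
   m(d) = max{ i : d_i >= i - 1 }; with j = i - 1 (0-based): max{ j+1 : d_j >= j }. *)
Definition mval (d : seq nat) : nat :=
  \max_(j < size d | j <= nth 0 d j) j.+1.

Definition Delta (k : nat) (d : seq nat) : int :=
  ((k * (k - 1))%:Z + (\sum_(k <= j < size d) minn k (nth 0 d j))%:Z
   - (\sum_(j < k) nth 0 d j)%:Z)%R.

(* Main.v *)
Require Import Defs.
From mathcomp Require Import all_boot all_order all_algebra zify.
Import Order.TTheory GRing.Theory Num.Theory.
Set Implicit Arguments. Unset Strict Implicit.

Lemma sum_take_nth (s : seq nat) k : \sum_(j < k) nth 0 s j = sumn (take k s).
Proof.
elim: s k => [|x s IH] [|k].
- by rewrite big_ord0.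
- by rewrite big1 // => j _; rewrite nth_nil.
- by rewrite big_ord0.
by rewrite big_ord_recl /= -IH.
Qed.

Lemma sumn_take_cons (x : nat) s k : sorted geq (x :: s) ->
  sumn (take k s) <= sumn (take k (x :: s)).
Proof.
elim: s x k => [|y s IH] x [|k] //= /andP[xy Hs].
have := IH y k Hs. rewrite /= in xy *. lia.
Qed.

Lemma subseq_sum (s t : seq nat) : sorted geq s -> subseq t s ->
  sumn t <= sumn (take (size t) s).
Proof.
elim: s t => [|x s IH] t Hs; first by move/eqP=> ->.
have Hs' : sorted geq s by move: Hs => /= /path_sorted.
case: t => [|y t] //=.
case: eqP => [->|_] Hsub.
  by rewrite leq_add2l; apply: IH.
have := IH (y :: t) Hs' Hsub. have := @sumn_take_cons x s (size t).+1 Hs.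
rewrite /=. lia.
Qed.

Lemma nth_geq {s : seq nat} {i j : nat} : sorted geq s -> i <= j -> nth 0 s j <= nth 0 s i.
Proof.
move=> Hs ij; case: (ltnP j (size s)) => js; last by rewrite nth_default.
have := @sorted_leq_nth _ geq (fun a b c H1 H2 => leq_trans H2 H1) (fun a => leqnn a) 0 s Hs.
move=> H; apply: (H i j) => //; rewrite inE; lia.
Qed.

Lemma mval_le_size d : mval d <= size d.
Proof. by apply/bigmax_leqP => j _. Qed.

Lemma mval_ge d j : j < size d -> j <= nth 0 d j -> j < mval d.
Proof.
move=> js H; rewrite /mval.
exact: (@leq_bigmax_cond _ (fun j : 'I_(size d) => j <= nth 0 d j)
   (fun j : 'I_(size d) => (nat_of_ord j).+1) (Ordinal js) H).
Qed.

Lemma mval_lt d k : sorted geq d -> k < mval d -> k <= nth 0 d k.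
Proof.
move=> Hs km; rewrite leqNgt; apply/negP => nk.
suff : mval d <= k by lia.
apply/bigmax_leqP => j Hj.
case: (ltnP j k) => // kj.
have := nth_geq Hs kj. lia.
Qed.

Lemma mval_gt d j : sorted geq d -> mval d <= j -> nth 0 d j <= mval d.
Proof.
move=> Hs mj.
case: (ltnP j (size d)) => js; last by rewrite nth_default.
have ms : mval d < size d by lia.
have H1 := nth_geq Hs mj.
case: (leqP (mval d) (nth 0 d (mval d))) => H2; last by lia.
have := mval_ge ms H2; lia.
Qed.

Definition Gf (s : seq nat) (k : nat) : int :=
  ((k * (k - 1))%:Z + (sumn s)%:Z - 2 * (sumn (take k s))%:Z)%R.

Lemma Gf_step s k : Gf s k.+1 = (Gf s k + 2 * k%:Z - 2 * (nth 0%N s k)%:Z)%R.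
Proof.
rewrite /Gf -!sum_take_nth big_ord_recr /=.
set S := \sum_(i < k) _. rewrite subn1 /=.
case: k S => [|k] S /=; nia.
Qed.

Lemma Gf_min s k : sorted geq s -> (Gf s (mval s) <= Gf s k)%R.
Proof.
move=> Hs; set m := mval s.
have down : forall i, i <= m -> (Gf s m <= Gf s (m - i))%R.
  elim=> [|i IH] im; first by rewrite subn0.
  have := IH (ltnW im). have := Gf_step s (m - i.+1).
  have -> : (m - i.+1).+1 = m - i by lia.
  have := mval_lt Hs (_ : m - i.+1 < mval s).
  move=> H1 E H2. have {}H1 := H1 ltac:(rewrite /m; lia). lia.
have up : forall i, (Gf s m <= Gf s (m + i))%R.
  elim=> [|i IH]; first by rewrite addn0.
  have := Gf_step s (m + i). rewrite addnS.
  have := mval_gt Hs (_ : mval s <= m + i). move=> H1 E.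
  have {}H1 := H1 ltac:(rewrite /m; lia). lia.
case: (leqP k m) => km.
  have := down (m - k) (leq_subr _ _). by have -> : m - (m - k) = k by lia.
have := up (k - m). by have -> : m + (k - m) = k by lia.
Qed.

Lemma Delta_Gf s : sorted geq s -> Delta (mval s) s = Gf s (mval s).
Proof.
move=> Hs; rewrite /Delta /Gf; set m := mval s.
have ms : m <= size s := mval_le_size s.
rewrite (@eq_big_nat _ _ _ _ _ _ (fun j => nth 0 s j)); last first.
  move=> j /andP[mj _]; apply/minn_idPr; exact: mval_gt.
have E : sumn s = \sum_(0 <= j < m) nth 0 s j + \sum_(m <= j < size s) nth 0 s j.
  rewrite -big_cat_nat //= big_mkord sum_take_nth take_size //.
rewrite E big_mkord sum_take_nth. lia.
Qed.

Lemma gdegE n (g : rel 'I_n) v : gdeg g v = \sum_u (g v u : nat).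
Proof.
rewrite /gdeg -sum1_card big_mkcond /=; apply: eq_bigr => u _.
by rewrite inE; case: (g v u).
Qed.

Definition NA n (g : rel 'I_n) (K : {pred 'I_n}) :=
  \sum_(v in K) \sum_(u in K) ((v != u) && ~~ g v u : nat).
Definition AI n (g : rel 'I_n) (K : {pred 'I_n}) :=
  \sum_(v | v \notin K) \sum_(u | u \notin K) (g v u : nat).

Lemma ident n (g : rel 'I_n) (K : {pred 'I_n}) : simple_graph g ->
  #|K| * (#|K| - 1) + \sum_(v | v \notin K) gdeg g v
  = \sum_(v in K) gdeg g v + (NA g K + AI g K).
Proof.
move=> [irr sym].
have Hk : \sum_(v in K) \sum_(u in K) ((v != u) : nat) = #|K| * (#|K| - 1).
  rewrite -sum_nat_const; apply: eq_bigr => v vK.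
  rewrite (cardD1 v) vK add1n subn1 /= (bigD1 v) //= eqxx add0n -sum1_card.
  apply: eq_big => [u|u /andP[_ uv]]; first by rewrite !inE andbC.
  by rewrite eq_sym uv.
have ne v u : ((v != u) : nat) = g v u + ((v != u) && ~~ g v u).
  case: eqP => [->|_]; first by rewrite irr.
  by case: (g v u).
have split v : gdeg g v = \sum_(u in K) (g v u : nat) + \sum_(u | u \notin K) (g v u : nat).
  by rewrite gdegE (bigID (mem K)) /=.
have E1 : \sum_(v in K) gdeg g v = \sum_(v in K) \sum_(u in K) (g v u : nat)
   + \sum_(v in K) \sum_(u | u \notin K) (g v u : nat).
  by rewrite -big_split; apply: eq_bigr => v _; exact: split.
have E2 : \sum_(v | v \notin K) gdeg g v = \sum_(v | v \notin K) \sum_(u in K) (g v u : nat)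
   + \sum_(v | v \notin K) \sum_(u | u \notin K) (g v u : nat).
  by rewrite -big_split; apply: eq_bigr => v _; exact: split.
have E3 : \sum_(v in K) \sum_(u in K) ((v != u) : nat) =
   \sum_(v in K) \sum_(u in K) (g v u : nat) + NA g K.
  rewrite /NA -big_split; apply: eq_bigr => v _.
  by rewrite -big_split; apply: eq_bigr => u _; exact: ne.
have E4 : \sum_(v | v \notin K) \sum_(u in K) (g v u : nat) =
          \sum_(v in K) \sum_(u | u \notin K) (g v u : nat).
  rewrite exchange_big /=; apply: eq_bigr => v _; apply: eq_bigr => u _.
  by rewrite sym.
rewrite /AI -Hk E2 E1 E3 E4. lia.
Qed.

Lemma sum_inj_le p n (f : 'I_p -> 'I_n) (P : pred 'I_n) (F : 'I_n -> nat) :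
  injective f -> \sum_(v | P (f v)) F (f v) <= \sum_(w | P w) F w.
Proof.
move=> inj.
have -> : \sum_(v | P (f v)) F (f v) = \sum_(v in [set v | P (f v)]) F (f v).
  by apply: eq_bigl => v; rewrite inE.
rewrite -big_imset; last by move=> x y _ _; apply: inj.
rewrite big_mkcond [X in _ <= X]big_mkcond /=; apply: leq_sum => w _.
case: imsetP => // [[v]]; rewrite inE => Pv ->; by rewrite Pv.
Qed.

Lemma NA_le p n (h : rel 'I_p) (g : rel 'I_n) (f : 'I_p -> 'I_n) (K : {pred 'I_n}) :
  injective f -> (forall x y, h x y = g (f x) (f y)) ->
  NA h [pred v | f v \in K] <= NA g K.
Proof.
move=> inj hg; rewrite /NA.
apply: leq_trans (_ : \sum_(v | f v \in K) \sum_(u in K) ((f v != u) && ~~ g (f v) u) <= _);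
  last exact: (sum_inj_le (fun w => w \in K) (fun w => \sum_(u in K) ((w != u) && ~~ g w u))).
rewrite (eq_bigl (fun v => f v \in K)); last by move=> v; rewrite inE.
apply: leq_sum => v _.
rewrite (eq_bigl (fun u => f u \in K)); last by move=> u; rewrite inE.
rewrite (eq_bigr (fun u => ((f v != f u) && ~~ g (f v) (f u)) : nat)); last first.
  by move=> u _; rewrite (inj_eq inj) hg.
exact: (sum_inj_le (fun w => w \in K) (fun w => ((f v != w) && ~~ g (f v) w) : nat)).
Qed.

Lemma AI_le p n (h : rel 'I_p) (g : rel 'I_n) (f : 'I_p -> 'I_n) (K : {pred 'I_n}) :
  injective f -> (forall x y, h x y = g (f x) (f y)) ->
  AI h [pred v | f v \in K] <= AI g K.
Proof.
move=> inj hg; rewrite /AI.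
apply: leq_trans (_ : \sum_(v | f v \notin K) \sum_(u | u \notin K) (g (f v) u : nat) <= _);
  last exact: (sum_inj_le (fun w => w \notin K) (fun w => \sum_(u | u \notin K) (g w u : nat))).
rewrite (eq_bigl (fun v => f v \notin K)); last by move=> v; rewrite inE.
apply: leq_sum => v _.
rewrite (eq_bigl (fun u => f u \notin K)); last by move=> u; rewrite inE.
rewrite (eq_bigr (fun u => (g (f v) (f u)) : nat)); last by move=> u _; rewrite hg.
exact: (sum_inj_le (fun w => w \notin K) (fun w => (g (f v) w) : nat)).
Qed.

Lemma degseq_map n (g : rel 'I_n) : exists s : seq 'I_n,
  [/\ uniq s, forall v, v \in s & degseq g = map (gdeg g) s].
Proof.
exists (sort (relpre (gdeg g) geq) (enum 'I_n)); split.
- by rewrite sort_uniq enum_uniq.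
- by move=> v; rewrite mem_sort mem_enum.
- by rewrite /degseq sort_map.
Qed.

Lemma sum_all n (s : seq 'I_n) (P : pred 'I_n) (F : 'I_n -> nat) :
  uniq s -> (forall v, v \in s) -> \sum_(v <- s | P v) F v = \sum_(v | P v) F v.
Proof.
move=> us alls; apply: perm_big; apply: uniq_perm => //; first exact: index_enum_uniq.
by move=> v; rewrite alls mem_index_enum.
Qed.

Lemma sorted_degseq n (g : rel 'I_n) : sorted geq (degseq g).
Proof. apply: sort_sorted => x y; exact: leq_total. Qed.

Lemma total_deg n (g : rel 'I_n) (s : seq 'I_n) : uniq s -> (forall v, v \in s) ->
  degseq g = map (gdeg g) s -> sumn (degseq g) = \sum_v gdeg g v.
Proof.
move=> us alls ->; rewrite sumnE big_map; exact: sum_all.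
Qed.

Theorem theorem12 (e d : seq nat) :
  is_degseq e -> is_degseq d -> rao_le e d ->
  (Delta (mval e) e <= Delta (mval d) d)%R.
Proof.
move=> _ _ [p [n [h [g [f [[sh <-] [sg <-] inj hg]]]]]].
have [t [ut allt Et]] := degseq_map h.
have [s [us alls Es]] := degseq_map g.
have Hse := sorted_degseq h; have Hsd := sorted_degseq g.
rewrite (Delta_Gf Hse) (Delta_Gf Hsd).
set me := mval (degseq h); set md := mval (degseq g).
have mds : md <= size s by rewrite -(size_map (gdeg g)) -Es mval_le_size.
pose KG : {pred 'I_n} := [pred v | v \in take md s].
pose KH : {pred 'I_p} := [pred v | f v \in KG].
have cKG : #|KG| = md.
  have -> : #|KG| = #|take md s| by apply: eq_card => v; rewrite inE.
  by move/card_uniqP: (take_uniq md us) => ->; rewrite size_takel.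
have SKG : \sum_(v in KG) gdeg g v = sumn (take md (degseq g)).
  rewrite Es -map_take sumnE big_map big_uniq; last exact: take_uniq.
  by apply: eq_bigl => v; rewrite inE.
have TG := total_deg us alls Es.
have splG : \sum_v gdeg g v = \sum_(v in KG) gdeg g v + \sum_(v | v \notin KG) gdeg g v.
  exact: (bigID (mem KG)).
have idG := ident KG sg.
set k := #|KH|.
have TH := total_deg ut allt Et.
have splH : \sum_v gdeg h v = \sum_(v in KH) gdeg h v + \sum_(v | v \notin KH) gdeg h v.
  exact: (bigID (mem KH)).
have idH := ident KH sh.
have SKH : \sum_(v in KH) gdeg h v <= sumn (take k (degseq h)).
  have -> : \sum_(v in KH) gdeg h v = sumn (map (gdeg h) (filter (mem KH) t)).
    by rewrite sumnE big_map big_filter sum_all.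
  have -> : k = size (map (gdeg h) (filter (mem KH) t)).
    by rewrite size_map size_filter -sum1_count sum_all // sum1_card.
  apply: subseq_sum => //; rewrite Et; apply: map_subseq; exact: filter_subseq.
have minH := Gf_min k Hse.
have NAle := NA_le KG inj hg.
have AIle := AI_le KG inj hg.
rewrite /Gf in minH *. rewrite /= in splG splH.
move: cKG SKG TG splG idG TH splH idH SKH minH NAle AIle.
rewrite -/KH -/me.
set P1 := k * (k - 1). set P3 := me * (me - 1). set P2 := md * (md - 1).
move=> cKG; rewrite cKG -/P2.
set A1 := \sum_(v in KG) gdeg g v. set A2 := \sum_(v | v \notin KG) gdeg g v.
set A3 := \sum_(v in KH) gdeg h v. set A4 := \sum_(v | v \notin KH) gdeg h v.
set A5 := \sum_v gdeg g v. set A6 := \sum_v gdeg h v.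
have two : forall x : int, (2 * x = x + x)%R by move=> x; rewrite mulr_natl mulr2n.
rewrite !two.
lia.
Qed.
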